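(* Let $m\geq 2$ and $n\geq 2$ be integers, let $G_m$ be a graph of order $m$ and $K_n$ the complete graph of order $n$. Then $rvcl(G_m\diamond K_n)\geq n+1$.
   Context: All graphs are finite, simple, connected and undirected; $d$ denotes graph distance. A rainbow vertex $k$-coloring of $G$ is a map $c:V(G)\to\{1,\dots,k\}$ such that every two vertices are joined by a path whose internal vertices all receive distinct colors. For such $c$ let $R_i=c^{-1}(i)$; the rainbow code of $v$ is $(d(v,R_1),\dots,d(v,R_k))$ with $d(v,R_i)=\min_{x\in R_i}d(v,x)$. A locating rainbow $k$-coloring is a rainbow vertex $k$-coloring in which distinct vertices have distinct rainbow codes; $rvcl(G)$ is the least $k$ for which one exists. For graphs $G_m$ (order $m$) and $H_n$ (order $n$) on disjoint vertex sets, the edge corona $G_m\diamond H_n$ is obtained from one copy of $G_m$ and $|E(G_m)|$ vertex-disjoint copies of $H_n$, one per edge of $G_m$, by joining both end vertices of the $j$-th edge of $G_m$ to every vertex of the $j$-th copy of $H_n$. *)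

(* Defs.v *)
From mathcomp Require Import all_boot.
Set Implicit Arguments. Unset Strict Implicit. Unset Printing Implicit Defensive.

(* A finite simple graph: vertex type T : finType with adjacency e : rel T,
   assumed symmetric and irreflexive (hypotheses of the theorem). *)

Section Graphs.
Variable T : finType.
Variable e : rel T.

Fixpoint ball (x : T) (k : nat) : {set T} :=
  match k with
  | 0 => [set x]
  | k'.+1 => ball x k' :|: [set z | [exists w in ball x k', e w z]]
  end.

(* graph distance d(x,y): least k with y in ball x k
   (equals #|T| if y is unreachable, which never happens in a connected graph) *)
Definition dist (x y : T) : nat := find (fun k => y \in ball x k) (iota 0 #|T|).

(* internal vertices of the walk x :: p *)
Definition internal (x : T) (p : seq T) : seq T := behead (belast x p).

Definition rainbow_vertex_coloring (k : nat) (c : T -> 'I_k) : Prop :=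
  forall x y : T, x != y ->
    exists p : seq T, [/\ path e x p, last x p = y, uniq (x :: p)
                        & uniq (map c (internal x p))].

Definition dist_class (k : nat) (c : T -> 'I_k) (v : T) (i : 'I_k) : nat :=
  \big[minn/#|T|]_(x | c x == i) dist v x.

Definition rainbow_code (k : nat) (c : T -> 'I_k) (v : T) : {ffun 'I_k -> nat} :=
  [ffun i => dist_class c v i].

(* every colour class R_i is nonempty (so the code is defined) and distinct
   vertices have distinct rainbow codes *)
Definition locating_rainbow_coloring (k : nat) (c : T -> 'I_k) : Prop :=
  [/\ rainbow_vertex_coloring c,
      (forall i : 'I_k, exists x, c x = i)
    & injective (rainbow_code c)].

End Graphs.

Section EdgeCorona.
Variables (T : finType) (e : rel T) (U : finType) (h : rel U).

Definition is_edge (A : {set T}) : bool :=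
  [exists x, exists y, e x y && (A == [set x; y])].

Definition edge := {A : {set T} | is_edge A}.

Definition ecV := (T + (edge * U))%type.

Definition ecorona_rel (a b : ecV) : bool :=
  match a, b with
  | inl x, inl y => e x y
  | inr (j, u), inr (j', v) => (j == j') && h u v
  | inl x, inr (j, _) => x \in val j
  | inr (j, _), inl x => x \in val j
  end.

End EdgeCorona.

Definition complete (n : nat) : rel 'I_n := fun u v => u != v.

(* Main.v *)
Require Import Defs.
From mathcomp Require Import all_boot.

Section Gen.
Variables (V : finType) (r : rel V) (Hirr : irreflexive r).

Lemma ball1 x z : (z \in ball r x 1) = (z == x) || r x z.
Proof.
rewrite /= in_setU in_set1 in_set; congr orb.
apply/existsP/idP => [[w /andP[/set1P -> ]]|H] //.
by exists x; rewrite in_set1 eqxx.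
Qed.

Lemma dist_self x : dist r x x = 0.
Proof.
rewrite /dist; have: 0 < #|V| by apply/card_gt0P; exists x.
case: #|V| => // N _ /=. by rewrite in_set1 eqxx.
Qed.

Lemma dist_pos x y : x != y -> 0 < dist r x y.
Proof.
move=> H; rewrite /dist; have: 0 < #|V| by apply/card_gt0P; exists x.
case: #|V| => // N _ /=. by rewrite in_set1 eq_sym (negbTE H).
Qed.

Lemma dist_adj x y : r x y -> dist r x y = 1.
Proof.
move=> H; have Hne: x != y by apply: contraTneq H => ->; rewrite Hirr.
have: 1 < #|V| by apply/card_gt1P; exists x, y.
rewrite /dist; case: #|V| => [|[|N]] // _.
rewrite /= in_set1 eq_sym (negbTE Hne) /=.
have := ball1 x y; rewrite H orbT /= => ->. by [].
Qed.

Lemma bigmin_le (I : eqType) (s : seq I) (P : pred I) (F : I -> nat) idx x :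
  x \in s -> P x -> \big[minn/idx]_(i <- s | P i) F i <= F x.
Proof.
elim: s => [|y s IH] //; rewrite in_cons big_cons => /orP[/eqP <- -> |Hs Px].
  exact: geq_minl.
case: (P y); last exact: IH.
by rewrite geq_min IH ?orbT.
Qed.

Lemma dist_class_self k (c : V -> 'I_k) v : dist_class r c v (c v) = 0.
Proof.
apply/eqP; rewrite -leqn0 -(dist_self v).
apply: bigmin_le => //; by rewrite mem_index_enum.
Qed.

Lemma dist_class_near k (c : V -> 'I_k) v i : c v != i ->
  (exists w, r v w && (c w == i)) -> dist_class r c v i = 1.
Proof.
move=> Hne [w /andP[Hw Hc]]; apply/eqP; rewrite eqn_leq; apply/andP; split.
  rewrite -(dist_adj _ _ Hw); apply: bigmin_le => //; by rewrite mem_index_enum.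
apply: (big_ind (fun n => 0 < n)).
- by apply/card_gt0P; exists v.
- by move=> a b Ha Hb; rewrite leq_min Ha Hb.
- move=> x Hx; apply: dist_pos; apply: contraNneq Hne => ->; exact: Hx.
Qed.

Lemma twin_dist a b x : ball r a 1 = ball r b 1 -> x != a -> x != b ->
  dist r a x = dist r b x.
Proof.
move=> H1 Ha Hb.
have Hk : forall k, ball r a k.+1 = ball r b k.+1.
  elim=> [|k IH]; first exact: H1.
  by move: IH => /= ->.
rewrite /dist; apply: eq_find => -[|k].
  by rewrite /= !in_set1 (negbTE Ha) (negbTE Hb).
by rewrite Hk.
Qed.
End Gen.

Theorem lemma4 (m n : nat) (T : finType) (e : rel T)
  (Hsym : symmetric e) (Hirr : irreflexive e)
  (Hconn : forall x y : T, connect e x y)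
  (Hm : 2 <= m) (Hn : 2 <= n) (HT : #|T| = m)
  (k : nat) (c : ecV e 'I_n -> 'I_k) :
  locating_rainbow_coloring (@ecorona_rel T e _ (@complete n)) c -> n.+1 <= k.
Proof.
move=> [_ _ Hinj].
have [x0 [z Hxz]] : exists x0 z, e x0 z.
  have: 1 < #|T| by rewrite HT.
  case/card_gt1P => x [y [_ _ Hxy]].
  move: (Hconn x y) => /connectP [p].
  case: p => [|z p] /=.
    by move=> _ Hl; rewrite Hl eqxx in Hxy.
  by move=> /andP[Hz _] _; exists x, z.
have Hj : is_edge e [set x0; z].
  by apply/existsP; exists x0; apply/existsP; exists z; rewrite Hxz eqxx.
pose j : edge e := exist (fun A => is_edge e A) _ Hj.
set r := @ecorona_rel T e _ (@complete n).
have Hrirr : irreflexive r.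
  by case => [x|[jj u]] /=; [exact: Hirr | rewrite eqxx /complete eqxx].
pose f u := c (inr (j, u)).
have Hball : forall u v, ball r (inr (j, u)) 1 = ball r (inr (j, v)) 1.
  have E : forall u (jj : edge e) w,
      (inr (jj, w) \in ball r (inr (j, u)) 1) = (j == jj).
    move=> u jj w; rewrite ball1 /=.
    case: (eqVneq j jj) => [<-|H] /=.
      case: (eqVneq u w) => [->|Hw]; first by rewrite eqxx.
      by rewrite /complete Hw orbT.
    by rewrite orbF; apply/eqP => -[E _]; rewrite E eqxx in H.
  move=> u v; apply/setP => -[y|[jj w]]; last by rewrite !E.
  by rewrite !ball1.
have Hfinj : injective f.
  move=> u v Huv; apply/eqP; apply/negPn/negP => Hne.
  have Hcode : rainbow_code r c (inr (j, u)) = rainbow_code r c (inr (j, v)).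
    apply/ffunP => i; rewrite !ffunE.
    case: (eqVneq i (f u)) => [->|Hi].
      rewrite {1}/f dist_class_self // Huv /f dist_class_self //.
    apply: eq_bigr => x /eqP Hx; apply: twin_dist => //.
      by apply: contra_neq Hi => E; rewrite -Hx E.
    by apply: contra_neq Hi => E; rewrite -Hx E.
  case: (Hinj _ _ Hcode) => E; by rewrite E eqxx in Hne.
rewrite ltnNge; apply/negP => Hkn.

have Hon := inj_card_onto Hfinj; rewrite !card_ord in Hon.
have Hsurj : forall i, exists u, f u = i.
  move=> i; have /codomP [u ->] := Hon Hkn i; by exists u.
have [u0 Hu0] := Hsurj (c (inl x0)).
have Hx0 : x0 \in val j by rewrite /= set21.
have Hcode : rainbow_code r c (inl x0) = rainbow_code r c (inr (j, u0)).
  apply/ffunP => i; rewrite !ffunE.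
  case: (eqVneq i (c (inl x0))) => [->|Hi].
    rewrite dist_class_self // -Hu0 /f dist_class_self //.
  have [u Hu] := Hsurj i.
  have Hb : c (inr (j, u0)) != i by rewrite -/(f u0) Hu0 eq_sym.
  rewrite (@dist_class_near _ r Hrirr _ c _ _ Hb); last first.
    exists (inr (j, u)); rewrite /= eqxx /complete -Hu eqxx andbT.
    by apply: contra_neq Hi => E; rewrite -Hu0 -Hu E.
  rewrite (@dist_class_near _ r Hrirr _ c) //; first by rewrite eq_sym.
  by exists (inr (j, u)); rewrite /= Hx0 -Hu eqxx.
by have := Hinj _ _ Hcode.
Qed.
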